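(* Let $n\ge 1$, $\lambda\in\mathbb{R}$, $t\ge 0$, and let $E_1,\dots,E_{n+1}$ and $k_1,\dots,k_n$ be complex numbers. Assume that $E_{p(j)}-E_j+i\lambda k(j;G)\neq 0$ for every $G\in\mathcal{G}_n$ and every $1\le j\le n$ (notation as in the context). Then $$\int_{0\le t_n\le\cdots\le t_1\le t} dt_1\cdots dt_n\,\prod_{j=1}^n e^{-it_j(E_{j+1}-E_j+i\lambda k_j)} =\sum_{G\in\mathcal{G}_n}\sigma(G)\left(\prod_{j=1}^n\frac{i}{E_{p(j)}-E_j+i\lambda k(j;G)}\right)\left(e^{-it\,(E_{p(1)}-E_1+i\lambda k(1;G))}-1\right),$$ where $p(j)=p_G(j)$.
   Context: $\mathcal{G}_n$ is the set of directed graphs $G$ on the vertex set $\{1,\dots,n+1\}$ that are in bijection with compositions of $n$ (finite ordered sequences $(c_1,\dots,c_r)$ of positive integers with $c_1+\dots+c_r=n$) as follows. Given a composition with partial sums $s_0=0<s_1<\dots<s_r=n$, every vertex $j$ with $s_{i-1}<j\le s_i$ receives exactly one bond, coming from the vertex $p(j):=s_i+1$; no other bonds are present. Hence $|\mathcal{G}_n|=2^{n-1}$. The sign of $G$ is $\sigma(G)=(-1)^{r-1}$, where $r$ is the number of parts of the composition. Equivalently, the signs are defined inductively: the unique graph in $\mathcal{G}_1$ has sign $+1$; from $G$ one obtains a graph with one more vertex either by adding a new block of size one at the start (sign flips) or by enlarging the first block by one (sign unchanged). For $1\le j\le n$, set $k(j;G)=\sum_{m=j}^{p(j)-1}k_m$.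 *)

(* Defs.v *)
From Stdlib Require Import Reals List Arith Lia FinFun.
From Coquelicot Require Import Coquelicot.
Import ListNotations.
Open Scope R_scope.

Definition cexp (z : C) : C :=
  (exp (fst z) * cos (snd z), exp (fst z) * sin (snd z)).


Definition Csum (l : list C) : C := fold_right Cplus (RtoC 0) l.
Definition Cprod (l : list C) : C := fold_right Cmult (RtoC 1) l.

Definition is_composition (n : nat) (c : list nat) : Prop :=
  List.Forall (fun a => (0 < a)%nat) c /\ list_sum c = n.

Fixpoint comps_aux (fuel n : nat) : list (list nat) :=
  match fuel with
  | O => match n with O => [[]] | _ => [] end
  | S f =>
      match n with
      | O => [[]]
      | _ => flat_map (fun a => map (cons a) (comps_aux f (n - a)))
                      (seq 1 n)
      end
  end.

Definition compositions (n : nat) : list (list nat) := comps_aux n n.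

(* p(j) for the graph G associated with the composition c:
   if s_{i-1} < j <= s_i then p(j) = s_i + 1.  [off] is the running partial sum. *)
Fixpoint p_aux (off : nat) (c : list nat) (j : nat) : nat :=
  match c with
  | [] => O
  | a :: c' => if (j <=? off + a)%nat then (off + a + 1)%nat else p_aux (off + a) c' j
  end.

Definition pG (c : list nat) (j : nat) : nat := p_aux 0 c j.

Definition sigmaG (c : list nat) : C := RtoC ((-1) ^ (length c - 1)).

Definition kG (k : nat -> C) (c : list nat) (j : nat) : C :=
  Csum (map k (seq j (pG c j - j))).

(* simplex_int fs s = int_{0 <= t_m <= ... <= t_1 <= s} prod_j fs_j(t_j),
   computed as the iterated (Riemann) integral
   int_0^s f_1(t_1) int_0^{t_1} f_2(t_2) ... int_0^{t_{m-1}} f_m(t_m). *)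
Fixpoint simplex_int (fs : list (R -> C)) (s : R) : C :=
  match fs with
  | [] => RtoC 1
  | f :: fs' =>
      @RInt C_R_CompleteNormedModule (fun u => Cmult (f u) (simplex_int fs' u)) 0 s
  end.

Lemma is_composition_nil_iff c : is_composition 0 c <-> c = [].
Proof.
  split.
  - intros [Hp Hs]. destruct c as [|a c]; [reflexivity|].
    inversion Hp; subst. simpl in Hs. lia.
  - intros ->. split; [constructor|reflexivity].
Qed.

Lemma comps_aux_spec f : forall n c, (n <= f)%nat ->
  (In c (comps_aux f n) <-> is_composition n c).
Proof.
  induction f as [|f IH]; intros n c Hn.
  - assert (n = 0%nat) by lia; subst. simpl.
    rewrite is_composition_nil_iff. split; [intros [H|[]]; auto | intros; left; auto].
  - destruct n as [|m].
    + simpl. rewrite is_composition_nil_iff. split; [intros [H|[]]; auto | intros; left; auto].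
    + cbn [comps_aux]. rewrite in_flat_map. split.
      * intros [a [Ha Hc]]. apply in_seq in Ha. apply in_map_iff in Hc.
        destruct Hc as [c' [<- Hc']]. apply IH in Hc'; [|lia].
        destruct Hc' as [Hp Hs]. split; [constructor; [lia|exact Hp]|]. simpl. lia.
      * intros [Hp Hs]. destruct c as [|a c']; [simpl in Hs; lia|].
        inversion Hp; subst. exists a. split; [apply in_seq; simpl in *; lia|].
        apply in_map_iff. exists c'. split; [reflexivity|]. simpl in Hs.
        assert (Ha : (0 < a)%nat) by assumption.
        apply IH; [lia|]. split; [assumption|]. lia.
Qed.

Lemma compositions_spec n c : In c (compositions n) <-> is_composition n c.
Proof. apply comps_aux_spec. lia. Qed.

Lemma NoDup_flat_map_cons (l : list nat) (g : nat -> list (list nat)) :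
  NoDup l -> (forall a, NoDup (g a)) ->
  NoDup (flat_map (fun a => map (cons a) (g a)) l).
Proof.
  induction 1 as [|a l Hnin Hnd IH]; intros Hg; simpl; [constructor|].
  apply NoDup_app.
  - apply FinFun.Injective_map_NoDup; [intros x y H; inversion H; auto | apply Hg].
  - apply IH, Hg.
  - intros x Hx1 Hx2. apply in_map_iff in Hx1. destruct Hx1 as [y [<- _]].
    apply in_flat_map in Hx2. destruct Hx2 as [b [Hb Hy]].
    apply in_map_iff in Hy. destruct Hy as [z [Hz _]]. inversion Hz; subst. auto.
Qed.

Lemma comps_aux_NoDup f : forall n, NoDup (comps_aux f n).
Proof.
  induction f as [|f IH]; intros n.
  - destruct n; repeat constructor; auto.
  - destruct n as [|m]; [repeat constructor; auto|].
    cbn [comps_aux]. apply NoDup_flat_map_cons; [apply seq_NoDup | intros; apply IH].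
Qed.

Lemma compositions_NoDup n : NoDup (compositions n).
Proof. apply comps_aux_NoDup. Qed.

(* Main.v *)
Require Import Defs.
From Stdlib Require Import Reals List Arith Lia.
From Coquelicot Require Import Coquelicot.
Import ListNotations.
Open Scope R_scope.

Lemma is_derive_C_pair (f : R -> C) (x : R) (l : C) :
  is_derive (fun u => fst (f u)) x (fst l) ->
  is_derive (fun u => snd (f u)) x (snd l) ->
  @is_derive R_AbsRing C_R_NormedModule f x l.
Proof.
  intros H1 H2.
  unfold is_derive in *.
  pose proof (@filterdiff_comp'_2 R_AbsRing R_NormedModule R_NormedModule R_NormedModule
     (prod_NormedModule R_AbsRing R_NormedModule R_NormedModule)
     (fun u => fst (f u)) (fun u => snd (f u)) (fun a b => (a, b)) x
     (fun y => scal y (fst l)) (fun y => scal y (snd l)) (fun a b => (a,b)) H1 H2) as H.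
  assert (Hid : filterdiff
    (fun t : prod_NormedModule R_AbsRing R_NormedModule R_NormedModule => (fst t, snd t))
    (locally ((fst (f x)), (snd (f x))))
    (fun t : prod_NormedModule R_AbsRing R_NormedModule R_NormedModule => (fst t, snd t))).
  { apply filterdiff_ext_lin with (fun t => t).
    - apply filterdiff_ext with (fun t => t). intros [a b]; reflexivity. apply filterdiff_id.
    - intros [a b]; reflexivity. }
  specialize (H Hid).
  apply filterdiff_ext with (fun y => (fst (f y), snd (f y))).
  { intros y. destruct (f y); reflexivity. }
  apply filterdiff_ext_lin with (fun y => (scal y (fst l), scal y (snd l))).
  exact H.
  intros y. destruct l; reflexivity.
Qed.

Definition g (D : C) (u : R) : C :=
  cexp (Cmult (Cmult (RtoC (- 1)) Ci) (Cmult (RtoC u) D)).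

Lemma cexp_plus z w : cexp (Cplus z w) = Cmult (cexp z) (cexp w).
Proof.
  destruct z as [a b], w as [c d]. unfold cexp, Cplus, Cmult; simpl.
  rewrite exp_plus, cos_plus, sin_plus. f_equal; ring.
Qed.

Lemma g_plus a D u : Cmult (g a u) (g D u) = g (Cplus a D) u.
Proof.
  unfold g. rewrite <- cexp_plus. f_equal. ring.
Qed.

Lemma g_0 D : g D 0 = RtoC 1.
Proof.
  unfold g. replace (Cmult (Cmult (RtoC (- 1)) Ci) (Cmult (RtoC 0) D)) with (RtoC 0) by ring.
  unfold cexp, RtoC; simpl. rewrite exp_0, cos_0, sin_0. f_equal; ring.
Qed.

Lemma g_eq d1 d2 u : g (d1, d2) u =
  (exp (u * d2) * cos (- (u * d1)), exp (u * d2) * sin (- (u * d1))).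
Proof.
  unfold g, cexp, Cmult, RtoC, Ci; simpl.
  replace ((-1 * 0 - 0 * 1) * (u * d1 - 0 * d2) - (-1 * 1 + 0 * 0) * (u * d2 + 0 * d1))
    with (u * d2) by ring.
  replace ((-1 * 0 - 0 * 1) * (u * d2 + 0 * d1) + (-1 * 1 + 0 * 0) * (u * d1 - 0 * d2))
    with (- (u * d1)) by ring.
  reflexivity.
Qed.

Lemma is_derive_cg (c D : C) (x : R) :
  @is_derive R_AbsRing C_R_NormedModule (fun u => Cmult c (g D u)) x
    (Cmult (Cmult c (Cmult (Cmult (RtoC (-1)) Ci) D)) (g D x)).
Proof.
  destruct c as [c1 c2], D as [d1 d2].
  apply is_derive_C_pair;
  (eapply is_derive_ext; [intros u; cbv beta; rewrite g_eq; reflexivity|]);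
  rewrite g_eq; unfold Cmult, RtoC, Ci; simpl;
  auto_derive; auto; ring.
Qed.

Lemma RtoC_m1 : RtoC (-1) = Copp (RtoC 1).
Proof. unfold RtoC, Copp; simpl. f_equal; ring. Qed.
Lemma Ci_sq : Cmult Ci Ci = Copp (RtoC 1).
Proof. unfold Ci, Cmult, RtoC, Copp; simpl. f_equal; ring. Qed.

Lemma minus_C (a b : C) : (@minus C_R_NormedModule a b : C) = Cminus a b.
Proof. reflexivity. Qed.

Lemma is_RInt_cg (c D : C) (t : R) : D <> RtoC 0 ->
  @is_RInt C_R_NormedModule (fun u => Cmult c (g D u)) 0 t
    (Cmult (Cmult c (Cdiv Ci D)) (Cminus (g D t) (RtoC 1))).
Proof.
  intros HD.
  assert (E : Cmult (Cmult c (Cdiv Ci D)) (Cminus (g D t) (RtoC 1)) =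
    (@minus C_R_NormedModule (Cmult (Cmult c (Cdiv Ci D)) (g D t))
       (Cmult (Cmult c (Cdiv Ci D)) (g D 0)) : C)).
  { rewrite g_0. transitivity (Cminus (Cmult (Cmult c (Cdiv Ci D)) (g D t)) (Cmult (Cmult c (Cdiv Ci D)) (RtoC 1))); [ring | symmetry; exact (minus_C _ _)]. }
   rewrite E. 
  apply (@is_RInt_derive C_R_CompleteNormedModule (fun u => Cmult (Cmult c (Cdiv Ci D)) (g D u)) (fun u => Cmult c (g D u))).
  - intros x _. 
    pose proof (is_derive_cg (Cmult c (Cdiv Ci D)) D x) as H.
    replace (Cmult (Cmult (Cmult c (Cdiv Ci D)) (Cmult (Cmult (RtoC (-1)) Ci) D)) (g D x))
      with (Cmult c (g D x)) in H. exact H.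
     rewrite RtoC_m1. transitivity (Cmult (Cmult c (Cdiv (Cmult (Copp (RtoC 1)) (Cmult Ci Ci)) D)) (Cmult D (g D x))); [rewrite Ci_sq | ]; field; exact HD. 
  - intros x _. apply (@ex_derive_continuous R_AbsRing C_R_NormedModule).
    eexists. apply is_derive_cg.
Qed.

Arguments g : simpl never.

Lemma Csum_app l1 l2 : Csum (l1 ++ l2) = Cplus (Csum l1) (Csum l2).
Proof. induction l1; simpl. ring. rewrite IHl1. ring. Qed.

Lemma Csum_map_plus {A} (f h : A -> C) l :
  Csum (map (fun x => Cplus (f x) (h x)) l) = Cplus (Csum (map f l)) (Csum (map h l)).
Proof. induction l; simpl. ring. rewrite IHl. ring. Qed.

Lemma Csum_map_ext_in {A} (f h : A -> C) l :
  (forall x, In x l -> f x = h x) -> Csum (map f l) = Csum (map h l).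
Proof. intros H. f_equal. apply map_ext_in. exact H. Qed.

Lemma Cmult_Csum {A} x (f : A -> C) l :
  Cmult x (Csum (map f l)) = Csum (map (fun y => Cmult x (f y)) l).
Proof. induction l; simpl. ring. rewrite <- IHl. ring. Qed.

Lemma is_RInt_Csum {A} (h : A -> R -> C) (v : A -> C) l a b :
  (forall x, In x l -> @is_RInt C_R_NormedModule (h x) a b (v x)) ->
  @is_RInt C_R_NormedModule (fun u => Csum (map (fun x => h x u) l)) a b (Csum (map v l)).
Proof.
  induction l as [|x l IH]; intros H; simpl.
  - apply (@is_RInt_ext C_R_NormedModule (fun _ => @zero C_R_NormedModule)).
    { intros; reflexivity. }
    pose proof (@is_RInt_const C_R_NormedModule a b zero) as Hc.
    assert (E : (scal (b - a) (@zero C_R_NormedModule) : C) = RtoC 0).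
    { apply (@scal_zero_r R_Ring C_R_ModuleSpace). }
    rewrite E in Hc. exact Hc.
  - apply (@is_RInt_plus C_R_NormedModule).
    + apply H. left; reflexivity.
    + apply IH. intros y Hy. apply H. right; exact Hy.
Qed.

Lemma comps_aux_fuel f1 : forall f2 n, (n <= f1)%nat -> (n <= f2)%nat ->
  comps_aux f1 n = comps_aux f2 n.
Proof.
  induction f1 as [|f1 IH]; intros f2 n H1 H2.
  - assert (n = 0%nat) by lia; subst. destruct f2; reflexivity.
  - destruct n as [|m]. { destruct f2; reflexivity. }
    destruct f2 as [|f2]. { lia. }
    cbn [comps_aux].
    assert (Hin : forall a, In a (seq 1 (S m)) ->
       map (cons a) (comps_aux f1 (S m - a)) = map (cons a) (comps_aux f2 (S m - a))).
    { intros a Ha. apply in_seq in Ha. f_equal. apply IH; lia. }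
    induction (seq 1 (S m)) as [|x l IHl]; simpl. reflexivity.
    rewrite Hin by (left; reflexivity). f_equal. apply IHl.
    intros a Ha. apply Hin. right; exact Ha.
Qed.

Definition enl (c : list nat) : list nat :=
  match c with [] => [] | a :: c' => S a :: c' end.

Lemma flat_map_map_S {B} (F : nat -> list B) l :
  flat_map F (map S l) = flat_map (fun b => F (S b)) l.
Proof. induction l; simpl; [reflexivity| rewrite IHl; reflexivity]. Qed.

Lemma map_flat_map' {A B C} (h : B -> C) (G : A -> list B) l :
  map h (flat_map G l) = flat_map (fun x => map h (G x)) l.
Proof. induction l; simpl; [reflexivity| rewrite map_app, IHl; reflexivity]. Qed.

Lemma flat_map_ext_in {A B} (F G : A -> list B) l :
  (forall x, In x l -> F x = G x) -> flat_map F l = flat_map G l.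
Proof.
  induction l; intros H; simpl. reflexivity.
  rewrite H by (left; reflexivity). f_equal. apply IHl. intros; apply H; right; auto.
Qed.

Lemma comps_aux_S f m : comps_aux (S f) (S m) =
  flat_map (fun a => map (cons a) (comps_aux f (S m - a))) (seq 1 (S m)).
Proof. reflexivity. Qed.

Lemma comp_split n : (1 <= n)%nat ->
  compositions (S n) = map (cons 1%nat) (compositions n) ++ map enl (compositions n).
Proof.
  intros Hn. unfold compositions. cbn [comps_aux].
  cbn [seq flat_map]. f_equal.
  { f_equal. cbn. rewrite Nat.sub_0_r. reflexivity. }
  destruct n as [|m]. { lia. }
  rewrite <- seq_shift. rewrite flat_map_map_S.
  rewrite (comps_aux_S m m). rewrite map_flat_map'.
  apply flat_map_ext_in. intros b Hb. apply in_seq in Hb.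
  rewrite map_map. cbn [enl].
  replace (S (S m) - S b)%nat with (S m - b)%nat by lia.
  rewrite (comps_aux_fuel (S m) m) by lia.
  induction (comps_aux m (S m - b)); simpl; [reflexivity|]. rewrite IHl. reflexivity.
Qed.

Arguments g : simpl never.

Definition Do (E k : nat -> C) (lambda : R) (off : nat) (c : list nat) (j : nat) : C :=
  Cplus (Cminus (E (p_aux off c j)) (E j))
    (Cmult Ci (Cmult (RtoC lambda) (Csum (map k (seq j (p_aux off c j - j)))))).

Definition aa (E k : nat -> C) (lambda : R) (j : nat) : C :=
  Cplus (Cminus (E (S j)) (E j)) (Cmult Ci (Cmult (RtoC lambda) (k j))).

Definition Tm E k lambda off n t (c : list nat) : C :=
  Cmult (sigmaG c)
    (Cmult (Cprod (map (fun j => Cdiv Ci (Do E k lambda off c j)) (seq (S off) n)))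
       (Cminus (g (Do E k lambda off c (S off)) t) (RtoC 1))).

Lemma p_aux_cons1 off c j : (S off < j)%nat -> p_aux off (1%nat :: c) j = p_aux (S off) c j.
Proof.
  intros H. cbn [p_aux]. destruct (Nat.leb_spec j (off + 1)). lia.
  rewrite Nat.add_1_r. reflexivity.
Qed.

Lemma Do_cons1 E k lambda off c j : (S off < j)%nat ->
  Do E k lambda off (1%nat :: c) j = Do E k lambda (S off) c j.
Proof. intros H. unfold Do. rewrite p_aux_cons1 by exact H. reflexivity. Qed.

Lemma Do_cons1_first E k lambda off c :
  Do E k lambda off (1%nat :: c) (S off) = aa E k lambda (S off).
Proof.
  unfold Do, aa.
  assert (H : p_aux off (1%nat :: c) (S off) = S (S off)).
  { cbn [p_aux]. destruct (Nat.leb_spec (S off) (off + 1)); lia. }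
  rewrite H. replace (S (S off) - S off)%nat with 1%nat by lia.
  cbn [seq map Csum fold_right]. f_equal. f_equal. f_equal. ring.
Qed.

Lemma p_aux_enl off b c j : p_aux off (S b :: c) j = p_aux (S off) (b :: c) j.
Proof. cbn [p_aux]. rewrite Nat.add_succ_r. reflexivity. Qed.

Lemma Do_enl E k lambda off c j :
  Do E k lambda off (enl c) j = Do E k lambda (S off) c j.
Proof.
  destruct c as [|b c]; [reflexivity|]. unfold Do. cbn [enl].
  rewrite p_aux_enl. reflexivity.
Qed.

Lemma Do_enl_first E k lambda off b c : (1 <= b)%nat ->
  Do E k lambda off (enl (b :: c)) (S off) =
  Cplus (aa E k lambda (S off)) (Do E k lambda (S off) (b :: c) (S (S off))).
Proof.
  intros Hb. rewrite Do_enl. unfold Do, aa.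
  assert (H1 : p_aux (S off) (b :: c) (S off) = (S off + b + 1)%nat).
  { cbn [p_aux]. destruct (Nat.leb_spec (S off) (S off + b)); lia. }
  assert (H2 : p_aux (S off) (b :: c) (S (S off)) = (S off + b + 1)%nat).
  { cbn [p_aux]. destruct (Nat.leb_spec (S (S off)) (S off + b)); lia. }
  rewrite H1, H2.
  replace (S off + b + 1 - S off)%nat with (S (S off + b + 1 - S (S off)))%nat by lia.
  cbn [seq map Csum fold_right]. fold (Csum (map k (seq (S (S off)) (S off + b + 1 - S (S off))))).
  ring.
Qed.

Lemma sigma_cons1 c : c <> [] -> sigmaG (1%nat :: c) = Copp (sigmaG c).
Proof.
  intros Hc. destruct c as [|x c]; [congruence|]. unfold sigmaG. cbn [length].
  replace (S (S (length c)) - 1)%nat with (S (length c)) by lia.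
  replace (S (length c) - 1)%nat with (length c) by lia.
  unfold RtoC, Copp; simpl. f_equal; ring.
Qed.

Lemma sigma_enl c : sigmaG (enl c) = sigmaG c.
Proof. destruct c; reflexivity. Qed.

Lemma is_RInt_Cminus (f h : R -> C) a b l1 l2 :
  @is_RInt C_R_NormedModule f a b l1 -> @is_RInt C_R_NormedModule h a b l2 ->
  @is_RInt C_R_NormedModule (fun u => Cminus (f u) (h u)) a b (Cminus l1 l2).
Proof. intros H1 H2. exact (@is_RInt_minus C_R_NormedModule f h a b l1 l2 H1 H2). Qed.

Lemma Cprod_cons x l : Cprod (x :: l) = Cmult x (Cprod l).
Proof. reflexivity. Qed.

Lemma comp_cons1 n c : is_composition n c -> is_composition (S n) (1%nat :: c).
Proof. intros [H1 H2]. split. constructor; [lia|exact H1]. simpl. lia. Qed.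

Lemma comp_enl n b c : is_composition n (b :: c) -> is_composition (S n) (enl (b :: c)).
Proof.
  intros [H1 H2]. inversion H1; subst. split. constructor; [lia|assumption]. simpl in *. lia.
Qed.

Lemma main_gen E k lambda n : (1 <= n)%nat -> forall off t,
  (forall c, is_composition n c -> forall j, (S off <= j <= off + n)%nat ->
     Do E k lambda off c j <> RtoC 0) ->
  simplex_int (map (fun j tj => g (aa E k lambda j) tj) (seq (S off) n)) t =
  Csum (map (Tm E k lambda off n t) (compositions n)).
Proof.
  induction n as [|n IH]; intros Hn off t H. lia.
  destruct (Nat.eq_dec n 0) as [->|Hn0].
  - change (compositions 1) with [[1%nat]].
    cbn [seq map simplex_int Csum fold_right].
    assert (Ha : aa E k lambda (S off) <> RtoC 0).
    { rewrite <- (Do_cons1_first E k lambda off []). apply H.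
      split; [constructor; [lia|constructor]|reflexivity]. lia. }
    pose proof (is_RInt_cg (RtoC 1) (aa E k lambda (S off)) t Ha) as Hi.
    assert (Hi' : @is_RInt C_R_NormedModule
      (fun u => Cmult (g (aa E k lambda (S off)) u) (RtoC 1)) 0 t
      (Cmult (Cmult (RtoC 1) (Cdiv Ci (aa E k lambda (S off))))
         (Cminus (g (aa E k lambda (S off)) t) (RtoC 1)))).
    { apply (@is_RInt_ext C_R_NormedModule (fun u => Cmult (RtoC 1) (g (aa E k lambda (S off)) u))).
      intros x _. change (@eq C (Cmult (RtoC 1) (g (aa E k lambda (S off)) x)) (Cmult (g (aa E k lambda (S off)) x) (RtoC 1))). ring. exact Hi. }
    rewrite (@is_RInt_unique C_R_CompleteNormedModule _ _ _ _ Hi').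
    unfold Tm. cbn [seq map Cprod fold_right sigmaG]. rewrite !Do_cons1_first.
    unfold sigmaG. simpl length. simpl Nat.sub. simpl pow. ring.
  - assert (Hn1 : (1 <= n)%nat) by lia.
    cbn [seq map simplex_int].
    set (a := aa E k lambda (S off)).
    set (P := fun c => Cmult (sigmaG c)
        (Cprod (map (fun j => Cdiv Ci (Do E k lambda (S off) c j)) (seq (S (S off)) n)))).
    set (Dc := fun c => Do E k lambda (S off) c (S (S off))).
    assert (IH' : forall u, simplex_int (map (fun j tj => g (aa E k lambda j) tj)
        (seq (S (S off)) n)) u = Csum (map (Tm E k lambda (S off) n u) (compositions n))).
    { intros u. apply IH; [exact Hn1|]. intros c Hc j Hj.
      rewrite <- Do_cons1 by lia. apply H; [apply comp_cons1; exact Hc | lia]. }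
    assert (Hstruct : forall c, In c (compositions n) ->
      exists b c', c = b :: c' /\ (1 <= b)%nat /\ is_composition n c).
    { intros c Hc. apply compositions_spec in Hc. destruct c as [|b c'].
      - destruct Hc as [_ Hs]. simpl in Hs. lia.
      - exists b, c'. split; [reflexivity|]. split; [|exact Hc].
        destruct Hc as [Hf _]. inversion Hf; subst. lia. }
    assert (Hnz : forall c, In c (compositions n) -> a <> RtoC 0 /\ Cplus a (Dc c) <> RtoC 0).
    { intros c Hc. destruct (Hstruct c Hc) as [b [c' [-> [Hb Hcomp]]]]. split.
      - unfold a. rewrite <- (Do_cons1_first E k lambda off (b :: c')). apply H.
        apply comp_cons1; exact Hcomp. lia.
      - unfold a, Dc. rewrite <- Do_enl_first by exact Hb. apply H.
        apply comp_enl; exact Hcomp. lia. }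
    set (V := Csum (map (fun c =>
       Cminus (Cmult (Cmult (P c) (Cdiv Ci (Cplus a (Dc c))))
                     (Cminus (g (Cplus a (Dc c)) t) (RtoC 1)))
              (Cmult (Cmult (P c) (Cdiv Ci a)) (Cminus (g a t) (RtoC 1))))
       (compositions n))).
    assert (Hint : @is_RInt C_R_NormedModule
      (fun u => Cmult (g a u) (simplex_int (map (fun j tj => g (aa E k lambda j) tj)
        (seq (S (S off)) n)) u)) 0 t V).
    { apply (@is_RInt_ext C_R_NormedModule (fun u => Csum (map (fun c =>
          Cminus (Cmult (P c) (g (Cplus a (Dc c)) u)) (Cmult (P c) (g a u)))
          (compositions n)))).
      { intros u _. change (@eq C (Csum (map (fun c =>
          Cminus (Cmult (P c) (g (Cplus a (Dc c)) u)) (Cmult (P c) (g a u)))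
          (compositions n))) (Cmult (g a u) (simplex_int (map (fun j tj => g (aa E k lambda j) tj)
        (seq (S (S off)) n)) u))). rewrite IH', Cmult_Csum. apply Csum_map_ext_in. intros c _.
        unfold Tm, P, Dc. rewrite <- g_plus. ring. }
      apply is_RInt_Csum. intros c Hc. destruct (Hnz c Hc) as [Ha HaD].
      apply is_RInt_Cminus; apply is_RInt_cg; assumption. }
    fold a. rewrite (@is_RInt_unique C_R_CompleteNormedModule _ _ _ _ Hint).
    unfold V. rewrite comp_split by exact Hn1. rewrite map_app, Csum_app, !map_map.
    rewrite <- Csum_map_plus. apply Csum_map_ext_in. intros c Hc.
    destruct (Hnz c Hc) as [Ha HaD].
    destruct (Hstruct c Hc) as [b [c' [Ec [Hb Hcomp]]]].
    unfold Tm. change (seq (S off) (S n)) with (S off :: seq (S (S off)) n).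
    cbn [map]. rewrite !Cprod_cons.
    rewrite (map_ext_in (fun j => Cdiv Ci (Do E k lambda off (1%nat :: c) j))
                        (fun j => Cdiv Ci (Do E k lambda (S off) c j))).
    2:{ intros j Hj. apply in_seq in Hj. rewrite Do_cons1 by lia. reflexivity. }
    rewrite (map_ext (fun j => Cdiv Ci (Do E k lambda off (enl c) j))
                     (fun j => Cdiv Ci (Do E k lambda (S off) c j))).
    2:{ intros j. rewrite Do_enl. reflexivity. }
    rewrite Do_cons1_first, sigma_enl.
    rewrite sigma_cons1 by (rewrite Ec; discriminate).
    subst c. rewrite Do_enl_first by exact Hb.
    unfold P, Dc in *. fold a. field. split; assumption.
Qed.

Theorem mainTheorem1 (n : nat) (lambda t : R) (E k : nat -> C) :
  (1 <= n)%nat -> 0 <= t ->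
  (forall c : list nat, is_composition n c ->
     forall j : nat, (1 <= j <= n)%nat ->
       Cplus (Cminus (E (pG c j)) (E j)) (Cmult Ci (Cmult (RtoC lambda) (kG k c j)))
         <> RtoC 0) ->
  simplex_int
    (map (fun j : nat => fun tj : R =>
            cexp (Cmult (Cmult (RtoC (- 1)) Ci) (Cmult (RtoC tj)
              (Cplus (Cminus (E (S j)) (E j)) (Cmult Ci (Cmult (RtoC lambda) (k j)))))))
       (seq 1 n)) t
  =
  Csum (map (fun c : list nat =>
     let D := fun j : nat =>
       Cplus (Cminus (E (pG c j)) (E j)) (Cmult Ci (Cmult (RtoC lambda) (kG k c j))) in
     Cmult (sigmaG c)
       (Cmult (Cprod (map (fun j : nat => Cdiv Ci (D j)) (seq 1 n)))
          (Cminus (cexp (Cmult (Cmult (RtoC (- 1)) Ci) (Cmult (RtoC t) (D 1%nat)))) (RtoC 1))))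
     (compositions n)).
Proof.
  intros Hn _ H.
  exact (main_gen E k lambda n Hn 0 t H).
Qed.
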